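(* Let $(X,L_1,\dots,L_n)$ have any joint distribution with $X$ finitely supported, $L_i\in\{0,1\}$, and $\Pr(L_i=0\mid X=x)>0$ for all $i$ and all $x$ in the support of $X$. Let $\pi$ be a collaborating cryptogenography protocol and $T$ its full transcript. Then \[ I(X;T)\le\sum_{i=1}^n\bigl(\mathrm{susp}_i(X,T)-\mathrm{susp}_i(X)\bigr). \]
   Context: All logarithms are base $2$. Collaborating cryptogenography protocol: there are $n$ players $\mathrm{plr}_1,\dots,\mathrm{plr}_n$; a secret $X$ (finitely supported) and indicators $L_1,\dots,L_n\in\{0,1\}$ ($L_i=1$ means $\mathrm{plr}_i$ knows $X$) have a joint distribution. A protocol $\pi$ specifies, for every possible partial transcript $t^k=(t_1,\dots,t_k)$ (the tuple of the first $k$ messages): whether communication stops; if not, which player $\mathrm{plr}_i$ sends the next message; and probability distributions $p_?$ and $(p_x)_{x}$ on a finite message set (depending on $t^k$). $\mathrm{plr}_i$ draws the next message, with fresh independent randomness, from $p_?$ if $L_i=0$ and from $p_x$ if $L_i=1$ and $X=x$. There is a number $\mathrm{length}(\pi)$ such that the protocol always stops after at most that many messages. $T$ denotes the random full transcript. Suspicion of player $i$: for a random variable $Y$ (possibly a tuple) and $y$ with $\Pr(Y=y)>0$, $\mathrm{susp}_i(Y=y)=-\log\Pr(L_i=0\mid Y=y)\in[0,\infty]$ and $\mathrm{susp}_i(Y)=\sum_y\Pr(Y=y)\mathrm{susp}_i(Y=y)$. *)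

(* Defs.v *)
From HB Require Import structures.
From Stdlib Require Import Reals.
From mathcomp Require Import all_boot.

Set Implicit Arguments.
Unset Strict Implicit.
Unset Printing Implicit Defensive.

HB.instance Definition _ :=
  Monoid.isComLaw.Build R R0 Rplus
    (fun a b c => esym (Rplus_assoc a b c)) Rplus_comm Rplus_0_l.

Open Scope R_scope.

Definition log2 (x : R) : R := ln x / ln 2.

Definition is_dist (T : finType) (p : T -> R) : Prop :=
  (forall t, 0 <= p t) /\ \big[Rplus/R0]_(t : T) p t = 1.

Definition prob (O : finType) (P : O -> R) (A : pred O) : R :=
  \big[Rplus/R0]_(w | A w) P w.

Definition cprob (O : finType) (P : O -> R) (A B : pred O) : R :=
  prob P (fun w => A w && B w) / prob P B.

Inductive xR := Fin of R | Inf.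

Definition xadd (a b : xR) : xR :=
  match a, b with Fin x, Fin y => Fin (x + y) | _, _ => Inf end.

(* a - b; only used when b is finite ((+oo) - finite = +oo);
   the value for b = Inf is junk (never used under the hypotheses). *)
Definition xsub (a b : xR) : xR :=
  match a, b with
  | Fin x, Fin y => Fin (x - y)
  | Inf, Fin _ => Inf
  | _, Inf => Fin 0
  end.

Definition xscale (r : R) (a : xR) : xR :=
  match a with Fin x => Fin (r * x) | Inf => Inf end.

Definition xle (a b : xR) : Prop :=
  match a, b with
  | Fin x, Fin y => x <= y
  | _, Inf => True
  | Inf, Fin _ => False
  end.

Definition xsum (T : finType) (f : T -> xR) : xR :=
  foldr xadd (Fin 0) (map f (enum T)).

Definition susp_at (O : finType) (P : O -> R) (Li : O -> bool)
    (YT : finType) (Y : O -> YT) (y : YT) : xR :=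
  let q := cprob P (fun w => ~~ Li w) (fun w => Y w == y) in
  if Req_EM_T q 0 then Inf else Fin (- log2 q).

Definition susp (O : finType) (P : O -> R) (Li : O -> bool)
    (YT : finType) (Y : O -> YT) : xR :=
  xsum (fun y : YT =>
    let py := prob P (fun w => Y w == y) in
    if Rlt_dec 0 py then xscale py (susp_at P Li Y y) else Fin 0).

Definition mutinf (O : finType) (P : O -> R) (XT YT : finType)
    (X : O -> XT) (Y : O -> YT) : R :=
  \big[Rplus/R0]_(xy : XT * YT)
    (let pxy := prob P (fun w => (X w == xy.1) && (Y w == xy.2)) in
     let px := prob P (fun w => X w == xy.1) in
     let py := prob P (fun w => Y w == xy.2) in
     if Rlt_dec 0 pxy then pxy * log2 (pxy / (px * py)) else 0).

(* A protocol with n players, secrets in XT and messages in M maps each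
   partial transcript to None (stop) or Some (i, p_?, p_x): player i speaks,
   drawing the next message from p_? if it does not know X, and from p_x
   if it knows X = x. *)
Definition protocol (n : nat) (XT M : finType) :=
  seq M -> option ('I_n * (M -> R) * (XT -> M -> R)).

Definition protocol_wf (n : nat) (XT M : finType) (pi : protocol n XT M) :=
  forall h i pq px, pi h = Some (i, pq, px) ->
    is_dist pq /\ forall x, is_dist (px x).

Definition protocol_length_le (n : nat) (XT M : finType)
    (pi : protocol n XT M) (N : nat) :=
  forall h : seq M, (N <= size h)%N -> pi h = None.

(* Pr(T = h ++ rest | X = x, L = l), given the partial transcript h *)
Fixpoint trans_prob_from (n : nat) (XT M : finType) (pi : protocol n XT M)
    (x : XT) (l : {ffun 'I_n -> bool}) (h rest : seq M) : R :=
  match rest with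
  | [::] => if pi h is None then 1 else 0
  | m :: rest' =>
      match pi h with
      | None => 0
      | Some (i, pq, px) =>
          (if l i then px x m else pq m) * trans_prob_from pi x l (rcons h m) rest'
      end
  end.

Definition trans_prob (n : nat) (XT M : finType) (pi : protocol n XT M)
    (x : XT) (l : {ffun 'I_n -> bool}) (t : seq M) : R :=
  trans_prob_from pi x l [::] t.

Definition transcript (M : finType) (N : nat) := {k : 'I_N.+1 & k.-tuple M}.
Definition tr_seq (M : finType) (N : nat) (t : transcript M N) : seq M :=
  tagged t.

Definition omega (n : nat) (XT M : finType) (N : nat) :=
  (XT * {ffun 'I_n -> bool} * transcript M N)%type.

Definition jointP (n : nat) (XT M : finType) (N : nat)
    (PXL : XT -> {ffun 'I_n -> bool} -> R) (pi : protocol n XT M)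
    (w : omega n XT M N) : R :=
  PXL w.1.1 w.1.2 * trans_prob pi w.1.1 w.1.2 (tr_seq w.2).

Definition rvX (n : nat) (XT M : finType) (N : nat) (w : omega n XT M N) : XT :=
  w.1.1.
Definition rvT (n : nat) (XT M : finType) (N : nat) (w : omega n XT M N)
  : transcript M N := w.2.
Definition rvXT (n : nat) (XT M : finType) (N : nat) (w : omega n XT M N)
  : (XT * transcript M N)%type := (w.1.1, w.2).
Definition rvL (n : nat) (XT M : finType) (N : nat) (i : 'I_n)
    (w : omega n XT M N) : bool := w.1.2 i.

(* Main.v *)
Require Import Defs.
From HB Require Import structures.
From Stdlib Require Import Reals Lra Classical.
From mathcomp Require Import all_boot.
Open Scope R_scope.

Set Implicit Arguments.
Unset Strict Implicit.

Section RSum.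
Variable I : Type.

Lemma sumR_le (r : seq I) (P : pred I) (F G : I -> R) :
  (forall i, P i -> F i <= G i) ->
  \big[Rplus/0]_(i <- r | P i) F i <= \big[Rplus/0]_(i <- r | P i) G i.
Proof. move=> H; apply: (big_ind2 (fun a b => a <= b)) => //; [lra|]. move=> *; lra. Qed.

Lemma sumR_ge0 (r : seq I) (P : pred I) (F : I -> R) :
  (forall i, P i -> 0 <= F i) -> 0 <= \big[Rplus/0]_(i <- r | P i) F i.
Proof. move=> H; apply: (big_ind (fun a => 0 <= a)) => //; [lra|]. move=> *; lra. Qed.

Lemma sumR_scale (r : seq I) (P : pred I) (F : I -> R) c :
  c * \big[Rplus/0]_(i <- r | P i) F i = \big[Rplus/0]_(i <- r | P i) (c * F i).
Proof. apply: (big_rec2 (fun a b => c * a = b)); [ring|]. move=> i a b _ <-; ring. Qed.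

Lemma sumR_split (r : seq I) (P : pred I) (F G : I -> R) :
  \big[Rplus/0]_(i <- r | P i) (F i + G i) =
  \big[Rplus/0]_(i <- r | P i) F i + \big[Rplus/0]_(i <- r | P i) G i.
Proof. exact: big_split. Qed.

Lemma sumR_opp (r : seq I) (P : pred I) (F : I -> R) :
  \big[Rplus/0]_(i <- r | P i) (- F i) = - \big[Rplus/0]_(i <- r | P i) F i.
Proof. apply: (big_rec2 (fun a b => a = - b)); [ring|]. move=> i a b _ ->; ring. Qed.

Lemma sumR_sub (r : seq I) (P : pred I) (F G : I -> R) :
  \big[Rplus/0]_(i <- r | P i) (F i - G i) =
  \big[Rplus/0]_(i <- r | P i) F i - \big[Rplus/0]_(i <- r | P i) G i.
Proof. rewrite /Rminus sumR_split sumR_opp //. Qed.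

Lemma sumR0 (r : seq I) (P : pred I) :
  \big[Rplus/0]_(i <- r | P i) (0:R) = 0.
Proof. by rewrite big1. Qed.

Lemma sumR_pos_ex (r : seq I) (P : pred I) (F : I -> R) :
  0 < \big[Rplus/0]_(i <- r | P i) F i -> exists i, P i /\ 0 < F i.
Proof.
move=> H; apply: NNPP => Hn.
have : \big[Rplus/0]_(i <- r | P i) F i <= \big[Rplus/0]_(i <- r | P i) 0.
  apply: sumR_le => i Pi; apply: Rnot_lt_le => Fi; apply: Hn; by exists i.
rewrite sumR0; lra.
Qed.
End RSum.

Section RSumFin.
Variable I : finType.

Lemma sumR_pos (P : pred I) (F : I -> R) j :
  (forall i, P i -> 0 <= F i) -> P j -> 0 < F j -> 0 < \big[Rplus/0]_(i | P i) F i.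
Proof.
move=> H Pj Fj; rewrite (bigD1 j) //=.
apply: Rlt_le_trans (_ : F j + 0 <= _); first lra.
apply: Rplus_le_compat_l; apply: sumR_ge0 => i /andP [] *; exact: H.
Qed.

Lemma sumR_term_le (F : I -> R) j :
  (forall i, 0 <= F i) -> F j <= \big[Rplus/0]_(i : I) F i.
Proof.
move=> H; rewrite (bigD1 j) //=.
apply: Rle_trans (_ : F j + 0 <= _); first lra.
apply: Rplus_le_compat_l; apply: sumR_ge0 => i _; exact: H.
Qed.

Lemma ln_le_sub1 z : 0 < z -> ln z <= z - 1.
Proof.
move=> hz; have := exp_ineq1_le (ln z); rewrite exp_ln //; lra.
Qed.

Lemma logsum (a b : I -> R) :
  (forall i, 0 <= a i) -> (forall i, 0 <= b i) -> (forall i, 0 < a i -> 0 < b i) ->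
  \big[Rplus/0]_(i : I) (a i * (ln (b i) - ln (a i))) <=
  (\big[Rplus/0]_(i : I) a i) * (ln (\big[Rplus/0]_(i : I) b i) - ln (\big[Rplus/0]_(i : I) a i)).
Proof.
move=> ha hb hab.
set A := \big[Rplus/0]_(i : I) a i; set B := \big[Rplus/0]_(i : I) b i.
have A0 : 0 <= A by apply: sumR_ge0.
have B0 : 0 <= B by apply: sumR_ge0.
case: (Rle_lt_or_eq_dec 0 A A0) => [Apos|A0e].
- have [j [_ aj]] := sumR_pos_ex Apos.
  have Bpos : 0 < B.
    apply: (@sumR_pos xpredT _ j) => //; exact: hab.
  have key : forall i, a i * (ln (b i) - ln (a i)) - a i * (ln B - ln A) <= b i * A / B - a i.
    move=> i; case: (Rle_lt_or_eq_dec 0 (a i) (ha i)) => [ai|<-].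
    + have bi := hab i ai.
      have z0 : 0 < b i * A / (a i * B).
        apply: Rdiv_lt_0_compat; apply: Rmult_lt_0_compat => //.
      have := ln_le_sub1 z0.
      rewrite /Rdiv ln_mult; last by apply: Rinv_0_lt_compat; apply: Rmult_lt_0_compat.
      2: by apply: Rmult_lt_0_compat.
      rewrite ln_mult // ln_Rinv; last by apply: Rmult_lt_0_compat.
      rewrite ln_mult // => h.
      have h2 := Rmult_le_compat_l (a i) _ _ (Rlt_le _ _ ai) h.
      have e : a i * (b i * A * / (a i * B) - 1) = b i * A * / B - a i.
        field; lra.
      rewrite e in h2. nra.
    + have : 0 <= b i * A / B.
        apply: Rmult_le_pos; [apply: Rmult_le_pos => //|].
        by apply: Rlt_le; apply: Rinv_0_lt_compat.
      lra.
  have := @sumR_le _ (index_enum I) xpredT _ _ (fun i _ => key i).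
  rewrite sumR_sub sumR_sub.
  have e1 : \big[Rplus/0]_(i : I) (a i * (ln B - ln A)) = A * (ln B - ln A).
    rewrite Rmult_comm sumR_scale; apply: eq_bigr => i _; ring.
  have e2 : \big[Rplus/0]_(i : I) (b i * A / B) = A.
    transitivity ((A / B) * B); last by field; lra.
    rewrite /B sumR_scale; apply: eq_bigr => i _; rewrite /Rdiv; ring.
  rewrite e1 e2 -/A; lra.
- have a0 : forall i, a i = 0.
    move=> i; have := sumR_term_le i ha; rewrite -/A -A0e => h; have := ha i; lra.
  rewrite big1 /=; last by move=> i _; rewrite a0; ring.
  rewrite -A0e; lra.
Qed.
End RSumFin.
Section Proto.
Variables (n : nat) (XT M : finType).
Notation L := {ffun 'I_n -> bool}.
Notation proto := (protocol n XT M).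

Fixpoint S (N : nat) : seq (seq M) :=
  [::] :: (if N is N'.+1 then [seq m :: s | m <- index_enum M, s <- S N'] else [::]).

Definition shift (pi : proto) (m : M) : proto := fun h => pi (m :: h).

Lemma tpf_shift (pi : proto) x l m h t :
  trans_prob_from pi x l (m :: h) t = trans_prob_from (shift pi m) x l h t.
Proof.
elim: t h => [|m' t IH] h /=; first by [].
rewrite /shift /=. case: (pi (m :: h)) => [[[i pq] px]|] //.
by rewrite IH.
Qed.

Definition fstep (i : 'I_n) (pq : M -> R) (px : XT -> M -> R) (m : M) (x : XT) (l : L) : R :=
  if l i then px x m else pq m.

Lemma tp_nil (pi : proto) x l :
  trans_prob pi x l [::] = if pi [::] is None then 1 else 0.
Proof. by []. Qed.

Lemma tp_cons (pi : proto) x l m t :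
  trans_prob pi x l (m :: t) =
  match pi [::] with None => 0
  | Some (i, pq, px) => fstep i pq px m x l * trans_prob (shift pi m) x l t end.
Proof.
rewrite /trans_prob /=. case: (pi [::]) => [[[i pq] px]|] //.
by rewrite tpf_shift.
Qed.

Lemma shift_wf (pi : proto) m : protocol_wf pi -> protocol_wf (shift pi m).
Proof. move=> H h i pq px e; exact: (H _ _ _ _ e). Qed.

Lemma shift_len (pi : proto) m N : protocol_length_le pi N.+1 -> protocol_length_le (shift pi m) N.
Proof. move=> H h hs; apply: H => /=; by rewrite ltnS. Qed.

Lemma fstep_ge0 (pi : proto) i pq px : protocol_wf pi -> pi [::] = Some (i, pq, px) ->
  forall m x l, 0 <= fstep i pq px m x l.
Proof.
move=> H e m x l; have [[h1 _] h2] := H _ _ _ _ e.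
rewrite /fstep; case: (l i) => //; by have [? _] := h2 x.
Qed.

Lemma fstep_sum (pi : proto) i pq px : protocol_wf pi -> pi [::] = Some (i, pq, px) ->
  forall x l, \big[Rplus/0]_(m : M) fstep i pq px m x l = 1.
Proof.
move=> H e x l; have [[_ h1] h2] := H _ _ _ _ e.
rewrite /fstep; case: (l i) => //; by have [_ ?] := h2 x.
Qed.

Lemma tp_ge0 (pi : proto) x l t : protocol_wf pi -> 0 <= trans_prob pi x l t.
Proof.
elim: t pi => [|m t IH] pi wf.
  rewrite tp_nil; case: (pi [::]) => *; lra.
rewrite tp_cons; case e: (pi [::]) => [[[i pq] px]|]; last lra.
apply: Rmult_le_pos; first exact: (fstep_ge0 wf e).
apply: IH; exact: shift_wf.
Qed.

Lemma sumS (N : nat) (F : seq M -> R) :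
  \big[Rplus/0]_(t <- S N.+1) F t =
  F [::] + \big[Rplus/0]_(m : M) \big[Rplus/0]_(t <- S N) F (m :: t).
Proof. by rewrite /= big_cons big_allpairs_dep. Qed.

Lemma sumS_nil (N : nat) (F : seq M -> R) :
  (forall m t, F (m :: t) = 0) -> \big[Rplus/0]_(t <- S N) F t = F [::].
Proof.
move=> H; case: N => [|N]; first by rewrite /= big_cons big_nil Rplus_0_r.
rewrite sumS big1 ?Rplus_0_r // => m _; rewrite big1 // => t _; exact: H.
Qed.

Lemma sum_to_one N (pi : proto) x l :
  protocol_wf pi -> protocol_length_le pi N ->
  \big[Rplus/0]_(t <- S N) trans_prob pi x l t = 1.
Proof.
elim: N pi => [|N IH] pi wf len.
  rewrite /= big_cons big_nil tp_nil len //; lra.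
rewrite sumS tp_nil.
case e: (pi [::]) => [[[i pq] px]|].
- rewrite Rplus_0_l -(fstep_sum wf e x l); apply: eq_bigr => m _.
  under eq_bigr do rewrite tp_cons e.
  rewrite -sumR_scale IH ?Rmult_1_r //; [exact: shift_wf | exact: shift_len].
- rewrite big1 ?Rplus_0_r // => m _; rewrite big1 // => t _; by rewrite tp_cons e.
Qed.

Definition W (Q : XT -> L -> R) (pi : proto) x t :=
  \big[Rplus/0]_(l : L) (Q x l * trans_prob pi x l t).
Definition Wi (Q : XT -> L -> R) (pi : proto) (j : 'I_n) x t :=
  \big[Rplus/0]_(l : L | ~~ l j) (Q x l * trans_prob pi x l t).
Definition Wt (Q : XT -> L -> R) (pi : proto) t :=
  \big[Rplus/0]_(x : XT) W Q pi x t.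
Definition Qx (Q : XT -> L -> R) x := \big[Rplus/0]_(l : L) Q x l.
Definition Qi (Q : XT -> L -> R) (j : 'I_n) x := \big[Rplus/0]_(l : L | ~~ l j) Q x l.
Definition Zs (Q : XT -> L -> R) := \big[Rplus/0]_(x : XT) Qx Q x.
Definition gxt Q pi x t :=
  W Q pi x t * (ln (W Q pi x t) - ln (Wt Q pi t)
     - \big[Rplus/0]_(j < n) (ln (W Q pi x t) - ln (Wi Q pi j x t))).
Definition Hent Q := \big[Rplus/0]_(x : XT) (Qx Q x * ln (Qx Q x)).
Definition Kj Q j := \big[Rplus/0]_(x : XT) (Qx Q x * (ln (Qx Q x) - ln (Qi Q j x))).
Definition Gx Q := - Hent Q + \big[Rplus/0]_(j < n) Kj Q j + Zs Q * ln (Zs Q).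
Definition Gxt Q pi N := \big[Rplus/0]_(x : XT) \big[Rplus/0]_(t <- S N) gxt Q pi x t.
Definition G Q pi N := Gxt Q pi N + Gx Q.
Definition Hfin Q pi := forall x j t, 0 < W Q pi x t -> 0 < Wi Q pi j x t.

Lemma G_base Q (pi : proto) N : pi [::] = None -> G Q pi N = 0.
Proof.
move=> e.
have W0 : forall x t, W Q pi x t = if t is [::] then Qx Q x else 0.
  move=> x [|m t]; rewrite /W.
  - apply: eq_bigr => l _; rewrite tp_nil e; ring.
  - apply: big1 => l _; rewrite tp_cons e; ring.
have Wi0 : forall j x, Wi Q pi j x [::] = Qi Q j x.
  move=> j x; rewrite /Wi; apply: eq_bigr => l _; rewrite tp_nil e; ring.
have Wt0 : Wt Q pi [::] = Zs Q.
  by apply: eq_bigr => x _; rewrite W0.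
rewrite /G /Gxt /Gx.
rewrite (eq_bigr (fun x => gxt Q pi x [::])); last first.
  move=> x _; apply: sumS_nil => m t; by rewrite /gxt W0 Rmult_0_l.
rewrite /gxt.
under eq_bigr do rewrite W0 Wt0.
under eq_bigr => x _ do (under eq_bigr do rewrite Wi0).
have E : forall x, Qx Q x * (ln (Qx Q x) - ln (Zs Q) -
     \big[Rplus/0]_(j < n) (ln (Qx Q x) - ln (Qi Q j x))) =
   Qx Q x * ln (Qx Q x) - Qx Q x * ln (Zs Q) -
     \big[Rplus/0]_(j < n) (Qx Q x * (ln (Qx Q x) - ln (Qi Q j x))).
  move=> x; rewrite !Rmult_minus_distr_l sumR_scale; reflexivity.
under eq_bigr do rewrite E.
rewrite !sumR_sub exchange_big /=.
rewrite /Hent /Kj /Zs.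
rewrite (_ : \big[Rplus/0]_(i : XT) (Qx Q i * ln (\big[Rplus/0]_(x : XT) Qx Q x)) =
   (\big[Rplus/0]_(x : XT) Qx Q x) * ln (\big[Rplus/0]_(x : XT) Qx Q x)).
  ring.
rewrite Rmult_comm sumR_scale; apply: eq_bigr => x _; ring.
Qed.

Definition Qm (Q : XT -> L -> R) i pq px (m : M) : XT -> L -> R :=
  fun x l => Q x l * fstep i pq px m x l.

Section Step.
Variables (Q : XT -> L -> R) (pi : proto) (i : 'I_n) (pq : M -> R) (px : XT -> M -> R).
Hypothesis e : pi [::] = Some (i, pq, px).

Lemma W_cons x m t : W Q pi x (m :: t) = W (Qm Q i pq px m) (shift pi m) x t.
Proof. apply: eq_bigr => l _; rewrite tp_cons e /Qm; ring. Qed.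
Lemma Wi_cons j x m t : Wi Q pi j x (m :: t) = Wi (Qm Q i pq px m) (shift pi m) j x t.
Proof. apply: eq_bigr => l _; rewrite tp_cons e /Qm; ring. Qed.
Lemma Wt_cons m t : Wt Q pi (m :: t) = Wt (Qm Q i pq px m) (shift pi m) t.
Proof. apply: eq_bigr => x _; exact: W_cons. Qed.
Lemma gxt_cons x m t : gxt Q pi x (m :: t) = gxt (Qm Q i pq px m) (shift pi m) x t.
Proof.
rewrite /gxt W_cons Wt_cons; congr (_ * (_ - _ - _)).
apply: eq_bigr => j _; by rewrite Wi_cons.
Qed.
Lemma gxt_nil x : gxt Q pi x [::] = 0.
Proof.
rewrite /gxt (_ : W Q pi x [::] = 0) ?Rmult_0_l //.
apply: big1 => l _; rewrite tp_nil e; ring.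
Qed.
Lemma Gxt_step N : Gxt Q pi N.+1 = \big[Rplus/0]_(m : M) Gxt (Qm Q i pq px m) (shift pi m) N.
Proof.
rewrite /Gxt [RHS]exchange_big /=; apply: eq_bigr => x _.
rewrite sumS gxt_nil Rplus_0_l; apply: eq_bigr => m _; apply: eq_bigr => t _.
exact: gxt_cons.
Qed.
Lemma Hfin_step m : Hfin Q pi -> Hfin (Qm Q i pq px m) (shift pi m).
Proof. move=> H x j t; rewrite -W_cons -Wi_cons; exact: H. Qed.
End Step.

Lemma Qm_ge0 (Q : XT -> L -> R) (pi : proto) i pq px m :
  protocol_wf pi -> pi [::] = Some (i, pq, px) ->
  (forall x l, 0 <= Q x l) -> forall x l, 0 <= Qm Q i pq px m x l.
Proof. move=> wf e H x l; apply: Rmult_le_pos => //; exact: (fstep_ge0 wf e). Qed.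

Lemma Hx_of (Q : XT -> L -> R) (pi : proto) N :
  (forall x l, 0 <= Q x l) -> protocol_wf pi -> protocol_length_le pi N ->
  Hfin Q pi -> forall x j, 0 < Qx Q x -> 0 < Qi Q j x.
Proof.
move=> Q0 wf len H x j.
have -> : Qx Q x = \big[Rplus/0]_(t <- S N) W Q pi x t.
  rewrite /W exchange_big; apply: eq_bigr => l _.
  by rewrite -sumR_scale sum_to_one // Rmult_1_r.
move/sumR_pos_ex => [t [_ Wpos]].
have := H x j t Wpos; rewrite /Wi; move/sumR_pos_ex => [l [lj pos]].
apply: (@sumR_pos _ (fun l : L => ~~ l j) _ l) => //.
have := tp_ge0 x l t wf; have := Q0 x l.
move=> h1 h2; case: (Rle_lt_or_eq_dec _ _ h1) => // h3.
rewrite -h3 Rmult_0_l in pos; lra.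
Qed.

Lemma Qx_ge0 (Q : XT -> L -> R) x : (forall x l, 0 <= Q x l) -> 0 <= Qx Q x.
Proof. move=> H; apply: sumR_ge0 => l _; exact: H. Qed.
Lemma Qi_ge0 (Q : XT -> L -> R) j x : (forall x l, 0 <= Q x l) -> 0 <= Qi Q j x.
Proof. move=> H; apply: sumR_ge0 => l _; exact: H. Qed.
Lemma Zs_ge0 (Q : XT -> L -> R) : (forall x l, 0 <= Q x l) -> 0 <= Zs Q.
Proof. move=> H; apply: sumR_ge0 => x _; exact: Qx_ge0. Qed.

Lemma prod_pos a b : 0 <= a -> 0 <= b -> 0 < a * b -> 0 < a /\ 0 < b.
Proof.
move=> ha hb hab; split.
- case: (Rle_lt_or_eq_dec _ _ ha) => // h; rewrite -h Rmult_0_l in hab; lra.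
- case: (Rle_lt_or_eq_dec _ _ hb) => // h; rewrite -h Rmult_0_r in hab; lra.
Qed.

Section OneStep.
Variables (Q : XT -> L -> R) (i : 'I_n) (pq : M -> R) (px : XT -> M -> R).
Hypothesis Q0 : forall x l, 0 <= Q x l.
Hypothesis fge0 : forall m x l, 0 <= fstep i pq px m x l.
Hypothesis fsum : forall x l, \big[Rplus/0]_(m : M) fstep i pq px m x l = 1.
Hypothesis pq_ge0 : forall m, 0 <= pq m.
Hypothesis pqsum : \big[Rplus/0]_(m : M) pq m = 1.
Hypothesis HxQm : forall m x j, 0 < Qx (Qm Q i pq px m) x -> 0 < Qi (Qm Q i pq px m) j x.
Notation Q_ m := (Qm Q i pq px m).

Lemma Qm0 m : forall x l, 0 <= Q_ m x l.
Proof. move=> x l; apply: Rmult_le_pos => //. Qed.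


Lemma F1 x : \big[Rplus/0]_(m : M) Qx (Q_ m) x = Qx Q x.
Proof.
rewrite /Qx exchange_big; apply: eq_bigr => l _.
by rewrite /Qm -sumR_scale fsum Rmult_1_r.
Qed.
Lemma F2 j x : \big[Rplus/0]_(m : M) Qi (Q_ m) j x = Qi Q j x.
Proof.
rewrite /Qi exchange_big; apply: eq_bigr => l _.
by rewrite /Qm -sumR_scale fsum Rmult_1_r.
Qed.
Lemma F3 : \big[Rplus/0]_(m : M) Zs (Q_ m) = Zs Q.
Proof. rewrite /Zs exchange_big; apply: eq_bigr => x _; exact: F1. Qed.
Lemma F4 m x : Qi (Q_ m) i x = pq m * Qi Q i x.
Proof.
rewrite /Qi sumR_scale; apply: eq_bigr => l /negbTE li.
rewrite /Qm /fstep li; ring.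
Qed.

Lemma Ej j : Kj Q j <= \big[Rplus/0]_(m : M) Kj (Q_ m) j.
Proof.
rewrite /Kj exchange_big; apply: sumR_le => x _.
have := @logsum M (fun m => Qx (Q_ m) x) (fun m => Qi (Q_ m) j x).
rewrite F1 F2 => H.
have h1 : forall m, 0 <= Qx (Q_ m) x.
  move=> m; apply: Qx_ge0 => y l; exact: Qm0.
have h2 : forall m, 0 <= Qi (Q_ m) j x.
  move=> m; apply: Qi_ge0 => y l; exact: Qm0.
have := H h1 h2 (fun m => @HxQm m x j).
have -> : \big[Rplus/0]_(m : M) (Qx (Q_ m) x * (ln (Qx (Q_ m) x) - ln (Qi (Q_ m) j x))) =
   - \big[Rplus/0]_(m : M) (Qx (Q_ m) x * (ln (Qi (Q_ m) j x) - ln (Qx (Q_ m) x))).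
  rewrite -sumR_opp; apply: eq_bigr => m _; ring.
lra.
Qed.

Lemma Ki_sum : \big[Rplus/0]_(m : M) Kj (Q_ m) i =
  \big[Rplus/0]_(m : M) Hent (Q_ m) - \big[Rplus/0]_(m : M) (Zs (Q_ m) * ln (pq m))
  - \big[Rplus/0]_(x : XT) (Qx Q x * ln (Qi Q i x)).
Proof.
have E : forall m x, Qx (Q_ m) x * (ln (Qx (Q_ m) x) - ln (Qi (Q_ m) i x)) =
   Qx (Q_ m) x * ln (Qx (Q_ m) x) - Qx (Q_ m) x * ln (pq m) - Qx (Q_ m) x * ln (Qi Q i x).
  move=> m x; case: (Rle_lt_or_eq_dec _ _ (Qx_ge0 x (@Qm0 m))) => h; last by rewrite -h; ring.
  have := @HxQm m x i h; rewrite F4 => h2.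
  have [h3 h4] := prod_pos (pq_ge0 m) (Qi_ge0 i x Q0) h2.
  rewrite ln_mult //; ring.
under eq_bigr do (rewrite /Kj; under eq_bigr do rewrite E).
under eq_bigr do rewrite !sumR_sub.
rewrite !sumR_sub; congr (_ - _ - _).
- apply: eq_bigr => m _; rewrite /Zs Rmult_comm sumR_scale; apply: eq_bigr => x _; ring.
- rewrite exchange_big; apply: eq_bigr => x _.
  by rewrite -F1 Rmult_comm sumR_scale; apply: eq_bigr => m _; rewrite Rmult_comm.
Qed.

Lemma onestep : Gx Q <= \big[Rplus/0]_(m : M) Gx (Q_ m).
Proof.
rewrite /Gx !sumR_split sumR_opp.
rewrite (exchange_big _ (index_enum M) (index_enum 'I_n) xpredT xpredT (fun m j => Kj (Q_ m) j)) /=.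
rewrite (bigD1 i) //= [X in _ <= _ + X + _](bigD1 i) //=.
have Hr : \big[Rplus/0]_(j < n | j != i) Kj Q j <=
          \big[Rplus/0]_(j < n | j != i) \big[Rplus/0]_(m : M) Kj (Q_ m) j.
  apply: sumR_le => j _; exact: Ej.
suff : - Hent Q + Kj Q i + Zs Q * ln (Zs Q) <=
       - (\big[Rplus/0]_(m : M) Hent (Q_ m)) + (\big[Rplus/0]_(m : M) Kj (Q_ m) i) +
       \big[Rplus/0]_(m : M) (Zs (Q_ m) * ln (Zs (Q_ m))).
  move: Hr. 
  set a := \big[Rplus/0]_(j < n | j != i) Kj Q j.
  set b := \big[Rplus/0]_(j < n | j != i) \big[Rplus/0]_(m : M) Kj (Q_ m) j.
  set c := \big[Rplus/0]_(m : M) Hent (Q_ m).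
  set d := \big[Rplus/0]_(m : M) Kj (Q_ m) i.
  set e := \big[Rplus/0]_(m : M) (Zs (Q_ m) * ln (Zs (Q_ m))).

  lra.
rewrite Ki_sum.
have HK : Kj Q i = Hent Q - \big[Rplus/0]_(x : XT) (Qx Q x * ln (Qi Q i x)).
  rewrite /Kj /Hent -sumR_sub; apply: eq_bigr => x _; ring.
rewrite HK.
have LS := @logsum M (fun m => Zs (Q_ m)) pq.
rewrite F3 pqsum ln_1 in LS.
have : \big[Rplus/0]_(m : M) (Zs (Q_ m) * (ln (pq m) - ln (Zs (Q_ m)))) <= Zs Q * (0 - ln (Zs Q)).
  apply: LS.
  - move=> m; apply: Zs_ge0 => x l; exact: Qm0.
  - exact: pq_ge0.
  - move=> m /sumR_pos_ex [x [_ hx]].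
    have := @HxQm m x i hx; rewrite F4 => h2.
    by have [] := prod_pos (pq_ge0 m) (Qi_ge0 i x Q0) h2.
rewrite (_ : \big[Rplus/0]_(m : M) (Zs (Q_ m) * (ln (pq m) - ln (Zs (Q_ m)))) =
   \big[Rplus/0]_(m : M) (Zs (Q_ m) * ln (pq m)) - \big[Rplus/0]_(m : M) (Zs (Q_ m) * ln (Zs (Q_ m)))).
  lra.
rewrite -sumR_sub; apply: eq_bigr => m _; ring.
Qed.
End OneStep.

Lemma main_ineq N : forall (Q : XT -> L -> R) (pi : proto),
  (forall x l, 0 <= Q x l) -> protocol_wf pi -> protocol_length_le pi N ->
  Hfin Q pi -> G Q pi N <= 0.
Proof.
elim: N => [|N IH] Q pi Q0 wf len hf.
  have e : pi [::] = None by apply: len.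
  rewrite G_base //; lra.
case e: (pi [::]) => [[[i pq] px]|]; last by rewrite G_base //; lra.
have [[pq0 pq1] _] := wf _ _ _ _ e.
rewrite /G (Gxt_step Q e).
have Hm : forall m, G (Qm Q i pq px m) (shift pi m) N <= 0.
  move=> m; apply: IH.
  - move=> x l; rewrite /Qm; apply: Rmult_le_pos => //; exact: (fstep_ge0 wf e).
  - exact: shift_wf.
  - exact: shift_len.
  - exact: (Hfin_step e).
have := @onestep Q i pq px Q0 (fstep_ge0 wf e) (fstep_sum wf e) pq0 pq1.
have HxQm : forall m x j, 0 < Qx (Qm Q i pq px m) x -> 0 < Qi (Qm Q i pq px m) j x.
  move=> m x j; apply: (@Hx_of _ (shift pi m) N).
  - move=> y l; rewrite /Qm; apply: Rmult_le_pos => //; exact: (fstep_ge0 wf e).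
  - exact: shift_wf.
  - exact: shift_len.
  - exact: (Hfin_step e).
move=> /(_ HxQm) H1.
have H2 : \big[Rplus/0]_(m : M) G (Qm Q i pq px m) (shift pi m) N <= 0.
  apply: (Rle_trans _ (\big[Rplus/0]_(m : M) 0)); [apply: sumR_le => m _; exact: Hm | rewrite big1 //; lra].
move: H2; rewrite /G sumR_split; lra.
Qed.
End Proto.

Section Bridge1.
Variables (n : nat) (XT M : finType).
Notation L := {ffun 'I_n -> bool}.
Notation proto := (protocol n XT M).

Lemma memS N t : (t \in S M N) = (size t <= N)%N.
Proof.
elim: N t => [|N IH] [|m t] //=.
rewrite in_cons /=; apply/allpairsP/idP.
  by move=> [[m' s] [_ hs [_ ->]]]; rewrite ltnS -IH.
move=> h; exists (m, t); split => //.
by rewrite /= IH -ltnS.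
Qed.

Lemma uniqS N : uniq (S M N).
Proof.
elim: N => [|N IH] //=; apply/andP; split.
  by apply/allpairsP => [[[m s] [_ _ ]]].
apply: allpairs_uniq => //; first exact: index_enum_uniq.
by move=> [m1 s1] [m2 s2] _ _ /= [-> ->].
Qed.

Lemma tr_seq_inj N : injective (@tr_seq M N).
Proof.
move=> [k1 t1] [k2 t2]; rewrite /tr_seq /= => H.
have e : k1 = k2 by apply: val_inj; rewrite /= -(size_tuple t1) -(size_tuple t2) H.
subst k2; congr existT; exact: val_inj.
Qed.

Definition mk_tr N (t : seq M) (h : (size t < N.+1)%N) : transcript M N :=
  existT (fun k : 'I_N.+1 => k.-tuple M) (Ordinal h) (in_tuple t).

Lemma mk_trK N t h : tr_seq (@mk_tr N t h) = t.
Proof. by []. Qed.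

Lemma sumT N (F : seq M -> R) :
  \big[Rplus/0]_(tt : transcript M N) F (tr_seq tt) = \big[Rplus/0]_(t <- S M N) F t.
Proof.
rewrite -(big_map (@tr_seq M N) xpredT F); apply: perm_big; apply: uniq_perm.
- rewrite map_inj_uniq ?index_enum_uniq //; exact: tr_seq_inj.
- exact: uniqS.
move=> t; rewrite memS; apply/mapP/idP.
  by move=> [[k tt] _ ->] /=; rewrite size_tuple -ltnS.
move=> h; exists (@mk_tr N t h) => //; exact: mem_index_enum.
Qed.

Lemma tp_long (pi : proto) N x l t : protocol_length_le pi N -> (N < size t)%N ->
  trans_prob pi x l t = 0.
Proof.
elim: t pi N => [|m t IH] pi N len //= hs.
rewrite tp_cons; case e: (pi [::]) => [[[i pq] px]|] //.
case: N len hs => [|N] len hs; first by rewrite len in e.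
rewrite (IH _ N) ?Rmult_0_r //; exact: shift_len.
Qed.
End Bridge1.

Lemma xfold_fin (T : Type) (s : seq T) (f : T -> xR) g :
  (forall y, f y = Fin (g y)) -> foldr xadd (Fin 0) (map f s) = Fin (\big[Rplus/0]_(y <- s) g y).
Proof.
move=> H; elim: s => [|y s IH] /=; first by rewrite big_nil.
by rewrite IH H big_cons.
Qed.

Lemma xfold_inf (T : eqType) (s : seq T) (f : T -> xR) y0 :
  y0 \in s -> f y0 = Inf -> foldr xadd (Fin 0) (map f s) = Inf.
Proof.
move=> hy hf; elim: s hy => [|y s IH] //=; rewrite in_cons => /orP [/eqP <-|hs].
  by rewrite hf.
by rewrite IH //; case: (f y).
Qed.

Lemma xsum_fin (T : finType) (f : T -> xR) g :
  (forall y, f y = Fin (g y)) -> xsum f = Fin (\big[Rplus/0]_(y : T) g y).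
Proof.
move=> H; rewrite /xsum (xfold_fin _ H) big_enum /=. 
by [].
Qed.

Lemma xsum_inf (T : finType) (f : T -> xR) y0 : f y0 = Inf -> xsum f = Inf.
Proof. move=> H; apply: (xfold_inf _ H); by rewrite mem_enum. Qed.

Lemma sum_pick (T : finType) (a : T) (F : T -> R) :
  (forall t, t != a -> F t = 0) -> \big[Rplus/0]_(t : T) F t = F a.
Proof.
move=> H; rewrite (bigD1 a) //= big1 ?Rplus_0_r // => t /andP [_ h]; exact: H.
Qed.

Section Bridge2.
Variables (n : nat) (XT M : finType) (N : nat).
Notation L := {ffun 'I_n -> bool}.
Variables (PXL : XT -> L -> R) (pi : protocol n XT M).
Hypothesis wf : protocol_wf pi.
Hypothesis len : protocol_length_le pi N.
Notation P := (jointP (N := N) PXL pi).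
Notation Om := (omega n XT M N).
Notation TT := (transcript M N).

Lemma prob_omega (pr : pred Om) :
  prob P pr = \big[Rplus/0]_(x : XT) \big[Rplus/0]_(l : L) \big[Rplus/0]_(tt : TT)
     (if pr ((x, l), tt) then PXL x l * trans_prob pi x l (tr_seq tt) else 0).
Proof.
rewrite /prob big_mkcond [RHS]pair_bigA [RHS]pair_bigA.
by apply: eq_bigr => [[[x l] tt]] _.
Qed.

Lemma sumTT1 x l : \big[Rplus/0]_(tt : TT) trans_prob pi x l (tr_seq tt) = 1.
Proof. rewrite (@sumT M N (fun t => trans_prob pi x l t)); exact: sum_to_one. Qed.

Lemma pX x0 : prob P (fun w => @rvX n XT M N w == x0) = Qx PXL x0.
Proof.
rewrite prob_omega (@sum_pick _ x0) => [|x hx]; last first.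
  by apply: big1 => l _; apply: big1 => tt _; rewrite /rvX /rvT /rvXT /rvL /= (negbTE hx).
apply: eq_bigr => l _; rewrite /rvX /rvT /rvXT /rvL /=; rewrite eqxx -sumR_scale sumTT1; ring.
Qed.

Lemma pXi i x0 : prob P (fun w => ~~ rvL i w && (@rvX n XT M N w == x0)) = Qi PXL i x0.
Proof.
rewrite prob_omega (@sum_pick _ x0) => [|x hx]; last first.
  by apply: big1 => l _; apply: big1 => tt _; rewrite /rvX /rvT /rvXT /rvL /= (negbTE hx) andbF.
rewrite /Qi [RHS]big_mkcond; apply: eq_bigr => l _; rewrite /rvX /rvT /rvXT /rvL /=; rewrite eqxx andbT /rvL /=.
case: (~~ l i); last by rewrite big1.
rewrite -sumR_scale sumTT1; ring.
Qed.

Lemma pXT x0 tt0 : prob P (fun w => (@rvX n XT M N w == x0) && (rvT w == tt0)) =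
  W PXL pi x0 (tr_seq tt0).
Proof.
rewrite prob_omega (@sum_pick _ x0) => [|x hx]; last first.
  by apply: big1 => l _; apply: big1 => tt _; rewrite /rvX /rvT /rvXT /rvL /= (negbTE hx).
apply: eq_bigr => l _; rewrite /rvX /rvT /rvXT /rvL /=; rewrite (@sum_pick _ tt0) => [|tt ht]; first by rewrite !eqxx.
by rewrite /rvX /rvT /rvXT /rvL /= (negbTE ht) andbF.
Qed.

Lemma pXT' x0 tt0 : prob P (fun w => @rvXT n XT M N w == (x0, tt0)) =
  W PXL pi x0 (tr_seq tt0).
Proof.
rewrite -pXT; rewrite /prob; apply: eq_bigl => w; by rewrite /rvXT xpair_eqE.
Qed.

Lemma pXTi i x0 tt0 : prob P (fun w => ~~ rvL i w && (@rvXT n XT M N w == (x0, tt0))) =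
  Wi PXL pi i x0 (tr_seq tt0).
Proof.
rewrite prob_omega (@sum_pick _ x0) => [|x hx]; last first.
  by apply: big1 => l _; apply: big1 => tt _; rewrite /rvX /rvT /rvXT /rvL /= xpair_eqE (negbTE hx) andbF.
rewrite /Wi [RHS]big_mkcond; apply: eq_bigr => l _ /=.
rewrite (@sum_pick _ tt0) => [|tt ht]; last by rewrite /rvX /rvT /rvXT /rvL /= xpair_eqE (negbTE ht) !andbF.
by rewrite /rvXT /rvL /= ?xpair_eqE ?eqxx ?andbT.
Qed.

Lemma pT tt0 : prob P (fun w => @rvT n XT M N w == tt0) = Wt PXL pi (tr_seq tt0).
Proof.
rewrite prob_omega /Wt /W; apply: eq_bigr => x _; apply: eq_bigr => l _.
rewrite (@sum_pick _ tt0) => [|tt ht]; first by rewrite /rvX /rvT /rvXT /rvL /= eqxx.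
by rewrite /rvX /rvT /rvXT /rvL /= (negbTE ht).
Qed.
End Bridge2.

Lemma ln2_pos : 0 < ln 2.
Proof. have := ln_lt_2; lra. Qed.

Lemma log2_ln y : log2 y * ln 2 = ln y.
Proof. rewrite /log2; field; have := ln2_pos; lra. Qed.

Section Final.
Variables (n : nat) (XT M : finType) (N : nat).
Notation L := {ffun 'I_n -> bool}.
Variables (PXL : XT -> L -> R) (pi : protocol n XT M).
Hypothesis Q0 : forall x l, 0 <= PXL x l.
Hypothesis wf : protocol_wf pi.
Hypothesis len : protocol_length_le pi N.
Hypothesis Z1 : Zs PXL = 1.
Hypothesis HxQ : forall i x, 0 < Qx PXL x -> 0 < Qi PXL i x.
Hypothesis Hf : Hfin PXL pi.

Notation W := (W PXL pi).
Notation Wi := (Wi PXL pi).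
Notation Wt := (Wt PXL pi).
Notation Qx := (Qx PXL).
Notation Qi := (Qi PXL).

Definition mi x t := if Rlt_dec 0 (W x t) then W x t * log2 (W x t / (Qx x * Wt t)) else 0.
Definition si i x t := if Rlt_dec 0 (W x t) then W x t * (- log2 (Wi i x t / W x t)) else 0.
Definition sx i x := if Rlt_dec 0 (Qx x) then Qx x * (- log2 (Qi i x / Qx x)) else 0.

Lemma W_ge0 x t : 0 <= W x t.
Proof. apply: sumR_ge0 => l _; apply: Rmult_le_pos => //; exact: tp_ge0. Qed.
Lemma Wi_ge0 i x t : 0 <= Wi i x t.
Proof. apply: sumR_ge0 => l _; apply: Rmult_le_pos => //; exact: tp_ge0. Qed.

Lemma sumW x : \big[Rplus/0]_(t <- S M N) W x t = Qx x.
Proof.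
rewrite /W exchange_big; apply: eq_bigr => l _.
by rewrite -sumR_scale sum_to_one // Rmult_1_r.
Qed.

Lemma Qx_pos x t : 0 < W x t -> 0 < Qx x.
Proof.
move=> /sumR_pos_ex [l [_ h]].
have [h1 _] := prod_pos (Q0 x l) (tp_ge0 x l t wf) h.
apply: (@sumR_pos _ xpredT _ l) => // l' _; exact: Q0.
Qed.

Lemma Wt_pos x t : 0 < W x t -> 0 < Wt t.
Proof.
move=> h; apply: Rlt_le_trans h _; apply: (@sumR_term_le _ (fun x => W x t) x).
move=> y; exact: W_ge0.
Qed.

Lemma mi_ln x t : mi x t * ln 2 = W x t * (ln (W x t) - ln (Wt t)) - W x t * ln (Qx x).
Proof.
rewrite /mi; case: Rlt_dec => h /=; last first.
  have e : W x t = 0 by have := W_ge0 x t; lra.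
  rewrite e; ring.
have h1 := Qx_pos h; have h2 := Wt_pos h.
rewrite Rmult_assoc log2_ln /Rdiv ln_mult // ?ln_Rinv ?ln_mult //.
- ring.
- by apply: Rmult_lt_0_compat.
- by apply: Rinv_0_lt_compat; apply: Rmult_lt_0_compat.
Qed.

Lemma si_ln i x t : si i x t * ln 2 = W x t * (ln (W x t) - ln (Wi i x t)).
Proof.
rewrite /si; case: Rlt_dec => h /=; last first.
  have e : W x t = 0 by have := W_ge0 x t; lra.
  rewrite e; ring.
have h1 := Hf i h.
rewrite (_ : W x t * - log2 (Wi i x t / W x t) * ln 2 = - W x t * (log2 (Wi i x t / W x t) * ln 2)); last ring.
rewrite log2_ln /Rdiv ln_mult // ?ln_Rinv //; last by apply: Rinv_0_lt_compat.
ring.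
Qed.

Lemma sx_ln i x : sx i x * ln 2 = Qx x * (ln (Qx x) - ln (Qi i x)).
Proof.
rewrite /sx; case: Rlt_dec => h /=; last first.
  have e : Qx x = 0 by have := Qx_ge0 x Q0; lra.
  rewrite e; ring.
have h1 := HxQ i h.
rewrite (_ : Qx x * - log2 (Qi i x / Qx x) * ln 2 = - Qx x * (log2 (Qi i x / Qx x) * ln 2)); last ring.
rewrite log2_ln /Rdiv ln_mult // ?ln_Rinv //; last by apply: Rinv_0_lt_compat.
ring.
Qed.

Lemma sumR_scaler (I : Type) (r : seq I) (P : pred I) (F : I -> R) c :
  (\big[Rplus/0]_(i <- r | P i) F i) * c = \big[Rplus/0]_(i <- r | P i) (F i * c).
Proof. rewrite Rmult_comm sumR_scale; apply: eq_bigr => i _; ring. Qed.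

Lemma real_ineq :
  \big[Rplus/0]_(x : XT) \big[Rplus/0]_(t <- S M N) mi x t <=
  \big[Rplus/0]_(i < n) (\big[Rplus/0]_(x : XT) \big[Rplus/0]_(t <- S M N) si i x t
                         - \big[Rplus/0]_(x : XT) sx i x).
Proof.
have HG := main_ineq Q0 wf len Hf.
rewrite /G /Gxt /Gx Z1 ln_1 Rmult_0_r Rplus_0_r in HG.
set A := \big[Rplus/0]_(x : XT) \big[Rplus/0]_(t <- S M N) (W x t * (ln (W x t) - ln (Wt t))).
set C := \big[Rplus/0]_(i < n) \big[Rplus/0]_(x : XT) \big[Rplus/0]_(t <- S M N)
            (W x t * (ln (W x t) - ln (Wi i x t))).
have e1 : \big[Rplus/0]_(x : XT) \big[Rplus/0]_(t <- S M N) gxt PXL pi x t = A - C.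
  rewrite /A /C.
  rewrite (exchange_big _ (index_enum 'I_n) (index_enum XT) xpredT xpredT) /=.
  rewrite -sumR_sub.
  apply: eq_bigr => x _.
  rewrite (exchange_big _ (index_enum 'I_n) (S M N) xpredT xpredT) /= -sumR_sub.
  apply: eq_bigr => t _; rewrite /gxt !Rmult_minus_distr_l sumR_scale; reflexivity.
have e2 : (\big[Rplus/0]_(x : XT) \big[Rplus/0]_(t <- S M N) mi x t) * ln 2 = A - Hent PXL.
  rewrite sumR_scaler /A /Hent -sumR_sub; apply: eq_bigr => x _.
  rewrite sumR_scaler (eq_bigr _ (fun t _ => mi_ln x t)) sumR_sub; congr (_ - _).
  by rewrite -sumW sumR_scaler.
have e3 : (\big[Rplus/0]_(i < n) (\big[Rplus/0]_(x : XT) \big[Rplus/0]_(t <- S M N) si i x t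
                         - \big[Rplus/0]_(x : XT) sx i x)) * ln 2 = C - \big[Rplus/0]_(i < n) Kj PXL i.
  rewrite sumR_scaler /C -sumR_sub; apply: eq_bigr => i _.
  rewrite Rmult_minus_distr_r; congr (_ - _).
  - rewrite sumR_scaler; apply: eq_bigr => x _.
    rewrite sumR_scaler; apply: eq_bigr => t _; exact: si_ln.
  - rewrite sumR_scaler; apply: eq_bigr => x _; exact: sx_ln.
apply: (Rmult_le_reg_r (ln 2)); first exact: ln2_pos.
rewrite e2 e3; rewrite e1 in HG; lra.
Qed.
End Final.

Unset Implicit Arguments.
Set Strict Implicit.

Theorem theorem3p4 (n : nat) (XT M : finType)
    (PXL : XT -> {ffun 'I_n -> bool} -> R)
    (PXL_dist : is_dist (fun xl : XT * {ffun 'I_n -> bool} => PXL xl.1 xl.2))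
    (PXL_hyp : forall (i : 'I_n) (x : XT),
        0 < prob (fun xl : XT * {ffun 'I_n -> bool} => PXL xl.1 xl.2)
               (fun xl => xl.1 == x) ->
        0 < cprob (fun xl : XT * {ffun 'I_n -> bool} => PXL xl.1 xl.2)
               (fun xl => ~~ xl.2 i) (fun xl => xl.1 == x))
    (pi : protocol n XT M) (pi_wf : protocol_wf pi)
    (N : nat) (pi_len : protocol_length_le pi N) :
  let P := jointP (N := N) PXL pi in
  xle (Fin (mutinf P (@rvX n XT M N) (@rvT n XT M N)))
      (xsum (fun i : 'I_n =>
         xsub (susp P (rvL i) (@rvXT n XT M N)) (susp P (rvL i) (@rvX n XT M N)))).
Proof.
move=> P; rewrite /P; clear P.
have [Q0 QS] := PXL_dist.
have Q0' : forall x l, 0 <= PXL x l := fun x l => Q0 (x, l).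
have Z1 : Zs PXL = 1.
  by rewrite /Zs /Qx (pair_bigA _ (fun x l => PXL x l)).
have pXL1 : forall x, prob (fun xl : XT * {ffun 'I_n -> bool} => PXL xl.1 xl.2)
               (fun xl => xl.1 == x) = Qx PXL x.
  move=> x; rewrite /prob big_mkcond.
  rewrite -(pair_bigA _ (fun x' l => if x' == x then PXL x' l else 0)) /=.
  rewrite (@sum_pick _ x) => [|y hy]; last by apply: big1 => l _; rewrite (negbTE hy).
  by apply: eq_bigr => l _; rewrite eqxx.
have pXL2 : forall i x, prob (fun xl : XT * {ffun 'I_n -> bool} => PXL xl.1 xl.2)
               (fun xl => ~~ xl.2 i && (xl.1 == x)) = Qi PXL i x.
  move=> i x; rewrite /prob big_mkcond.
  rewrite -(pair_bigA _ (fun x' (l : {ffun 'I_n -> bool}) => if ~~ l i && (x' == x) then PXL x' l else 0)) /=.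
  rewrite (@sum_pick _ x) => [|y hy]; last by apply: big1 => l _; rewrite (negbTE hy) andbF.
  rewrite /Qi [RHS]big_mkcond; by apply: eq_bigr => l _; rewrite eqxx andbT.
have HxQ : forall i x, 0 < Qx PXL x -> 0 < Qi PXL i x.
  move=> i x hx; have := PXL_hyp i x; rewrite pXL1 => /(_ hx).
  rewrite /cprob pXL2 pXL1 => h.
  case: (Rle_lt_or_eq_dec _ _ (Qi_ge0 i x Q0')) => // e.
  by rewrite -e /Rdiv Rmult_0_l in h; lra.
have sX : forall i, susp (jointP (N := N) PXL pi) (rvL i) (@rvX n XT M N) =
    Fin (\big[Rplus/0]_(x : XT) sx PXL i x).
  move=> i; rewrite /susp (@xsum_fin _ _ (fun x => sx PXL i x)) // => x /=.
  rewrite pX // /sx; case: Rlt_dec => h //=.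
  rewrite /susp_at /cprob pXi // pX //; case: Req_EM_T => hq //.
  have := HxQ i x h => h2.
  have : 0 < Qi PXL i x / Qx PXL x by apply: Rdiv_lt_0_compat.
  lra.
case: (classic (Hfin PXL pi)) => Hf.
- have sXT : forall i, susp (jointP (N := N) PXL pi) (rvL i) (@rvXT n XT M N) =
      Fin (\big[Rplus/0]_(x : XT) \big[Rplus/0]_(t <- S M N) si PXL pi i x t).
    move=> i; rewrite /susp (@xsum_fin _ _ (fun y => si PXL pi i y.1 (tr_seq y.2))).
    + congr Fin; rewrite -(pair_bigA _ (fun x tt => si PXL pi i x (tr_seq tt))) /=.
      apply: eq_bigr => x _; exact: (@sumT M N (fun t => si PXL pi i x t)).
    + move=> [x tt] /=; rewrite pXT' /si; case: Rlt_dec => h //=.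
      rewrite /susp_at /cprob pXTi pXT'; case: Req_EM_T => hq //.
      have h2 := Hf x i _ h.
      have : 0 < Wi PXL pi i x (tr_seq tt) / W PXL pi x (tr_seq tt) by apply: Rdiv_lt_0_compat.
      lra.
  have mI : mutinf (jointP (N := N) PXL pi) (@rvX n XT M N) (@rvT n XT M N) =
      \big[Rplus/0]_(x : XT) \big[Rplus/0]_(t <- S M N) mi PXL pi x t.
    rewrite /mutinf (eq_bigr (fun y => mi PXL pi y.1 (tr_seq y.2))).
      rewrite -(pair_bigA _ (fun x tt => mi PXL pi x (tr_seq tt))) /=.
      apply: eq_bigr => x _; exact: (@sumT M N (fun t => mi PXL pi x t)).
    move=> [x tt] _ /=; rewrite pXT // pX // pT //.
  rewrite mI (@xsum_fin _ _ (fun i => \big[Rplus/0]_(x : XT) \big[Rplus/0]_(t <- S M N) si PXL pi i x t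
         - \big[Rplus/0]_(x : XT) sx PXL i x)).
    by apply: real_ineq.
  move=> i; by rewrite sXT sX.
- have [x [j [t [hW hWi]]]] : exists x j t, 0 < W PXL pi x t /\ ~ 0 < Wi PXL pi j x t.
    apply: NNPP => hn; apply: Hf => x j t h; apply: NNPP => h2; apply: hn; by exists x, j, t.
  have hs : (size t < N.+1)%N.
    rewrite ltnS leqNgt; apply/negP => hl.
    have : W PXL pi x t = 0.
      by apply: big1 => l _; rewrite (tp_long _ _ pi_len hl); ring.
    lra.
  have e0 : Wi PXL pi j x t = 0.
    have : 0 <= Wi PXL pi j x t.
      apply: sumR_ge0 => l _; apply: Rmult_le_pos => //; exact: tp_ge0.
    lra.
  rewrite (@xsum_inf _ _ j) //=.
  have -> : susp (jointP (N:=N) PXL pi) (rvL j) (@rvXT n XT M N) = Inf.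
    rewrite /susp (@xsum_inf _ _ (x, mk_tr hs)) //=.
    rewrite pXT' mk_trK; case: Rlt_dec => h //=.
    rewrite /susp_at /cprob pXTi pXT' mk_trK e0 /Rdiv Rmult_0_l; case: Req_EM_T => //.
  by rewrite sX.
Qed.
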